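(* Let $\beta$ be any real number and let $\alpha>\frac{1+\sqrt{33}}{2}$. Then there exists $N$ such that for every integer $n\geqslant N$ the polynomial $\phi_n^{(\alpha,\beta)}(\mu)$ has at least one non-real zero.
   Context: For real $a$ and integer $m\geqslant0$, $(a)_m=a(a+1)\cdots(a+m-1)$, $(a)_0=1$. For real $\alpha>-1$ and real $\beta$, $$\phi_n^{(\alpha,\beta)}(\mu)=\frac{(\alpha+1)_n}{n!}\sum_{k=0}^{[n/2]}\frac{(-n)_{2k}(n+\alpha+\beta+1)_{2k}}{(\alpha+1)_{2k}}\Big(\frac{\mu}{4}\Big)^k,$$ which equals $\sum_{k=0}^{[n/2]}\big(\tfrac{d^{2k}}{dx^{2k}}P_n^{(\alpha,\beta)}(x)\big)\big|_{x=1}\mu^k$ for the Jacobi polynomial $P_n^{(\alpha,\beta)}$; here $[a]$ denotes the integer part of $a$. *)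

(* Defs.v *)
From Stdlib Require Import Reals Lra Lia Arith Factorial.
Open Scope R_scope.

Fixpoint poch (a : R) (m : nat) : R :=
  match m with
  | O => 1
  | S m' => poch a m' * (a + INR m')
  end.

Definition phi_coef (alpha beta : R) (n k : nat) : R :=
  poch (alpha + 1) n / INR (fact n) *
  (poch (- INR n) (2 * k) * poch (INR n + alpha + beta + 1) (2 * k)
   / poch (alpha + 1) (2 * k)) * (/ 4) ^ k.

Definition phi (alpha beta : R) (n : nat) (mu : R) : R :=
  sum_f_R0 (fun k => phi_coef alpha beta n k * mu ^ k) (Nat.div2 n).

Definition Cplx := (R * R)%type.
Definition Cadd (z w : Cplx) : Cplx := (fst z + fst w, snd z + snd w).
Definition Cmul (z w : Cplx) : Cplx :=
  (fst z * fst w - snd z * snd w, fst z * snd w + snd z * fst w).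
Definition Cscale (c : R) (z : Cplx) : Cplx := (c * fst z, c * snd z).
Fixpoint Cpow (z : Cplx) (k : nat) : Cplx :=
  match k with
  | O => (1, 0)
  | S k' => Cmul (Cpow z k') z
  end.
Fixpoint Csum (f : nat -> Cplx) (n : nat) : Cplx :=
  match n with
  | O => f O
  | S n' => Cadd (Csum f n') (f n)
  end.

Definition phiC (alpha beta : R) (n : nat) (z : Cplx) : Cplx :=
  Csum (fun k => Cscale (phi_coef alpha beta n k) (Cpow z k)) (Nat.div2 n).

Definition has_nonreal_zero (alpha beta : R) (n : nat) : Prop :=
  exists z : Cplx, snd z <> 0 /\ phiC alpha beta n z = (0, 0).

(* Main.v *)
From Pilot Require Import Defs.
From Stdlib Require Import Reals Lra Lia Psatz Arith Factorial Classical.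
From Coquelicot Require Import Coquelicot.
Import Pilot.Defs.
Open Scope R_scope.
Lemma inv_n_lim : is_lim_seq (fun n => / INR n) 0.
Proof.
  apply (is_lim_seq_inv INR p_infty is_lim_seq_INR). discriminate.
Qed.

Lemma lim_lin (c : R) : is_lim_seq (fun n => 1 + c * / INR n) 1.
Proof.
  pose proof (is_lim_seq_plus' _ _ 1 (c*0) (is_lim_seq_const 1)
    (is_lim_seq_mult' _ _ c 0 (is_lim_seq_const c) inv_n_lim)) as H.
  replace (1 + c*0) with 1 in H by ring. exact H.
Qed.

Lemma lim_f (g K1 K2 : R) :
  is_lim_seq (fun n => K2 * ((1 + (-2) * / INR n) * (1 + (-3) * / INR n) *
      (1 + (g+2) * / INR n) * (1 + (g+3) * / INR n))
     - K1 * ((1 + (-1) * / INR n) * (1 + g * / INR n) * (1 + (g+1) * / INR n)))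
   (K2 - K1).
Proof.
  replace (K2 - K1) with (K2 * (1*1*1*1) - K1 * (1*1*1)) by ring.
  apply is_lim_seq_minus'; apply is_lim_seq_mult'; try apply is_lim_seq_const;
  repeat apply is_lim_seq_mult'; apply lim_lin.
Qed.

Lemma eventually_all (g K1 K2 : R) : K2 - K1 > 0 ->
  exists N : nat, forall n : nat, (N <= n)%nat ->
   (4 <= n)%nat /\ INR n + g > 0 /\
   K2 * ((INR n - 2) * (INR n - 3) * (INR n + g + 2) * (INR n + g + 3))
   - K1 * (INR n * (INR n - 1) * (INR n + g) * (INR n + g + 1)) > 0.
Proof.
  intros HD.
  pose proof (lim_f g K1 K2) as H1.
  pose proof (lim_lin g) as H2.
  apply is_lim_seq_spec in H1. apply is_lim_seq_spec in H2.
  destruct (H1 (mkposreal _ HD)) as [N1 HN1].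
  destruct (H2 (mkposreal _ Rlt_0_1)) as [N2 HN2].
  exists (N1 + N2 + 4)%nat. intros n Hn.
  assert (Hx : INR n >= 4).
  { apply Rle_ge. replace 4 with (INR 4) by (simpl; ring). apply le_INR. lia. }
  assert (Hx0 : INR n <> 0) by lra.
  specialize (HN1 n ltac:(lia)). specialize (HN2 n ltac:(lia)). simpl in HN1, HN2.
  split; [lia|]. split.
  - apply Rabs_lt_between in HN2.
    assert (0 < 1 + g * / INR n) by lra.
    replace (INR n + g) with (INR n * (1 + g * / INR n)) by (field; auto).
    apply Rmult_lt_0_compat; lra.
  - apply Rabs_lt_between in HN1.
    set (x := INR n) in *.
    match goal with |- ?E > 0 =>
      replace E with (x^4 * (K2 * ((1 + (-2) * / x) * (1 + (-3) * / x) *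
      (1 + (g+2) * / x) * (1 + (g+3) * / x))
     - K1 * ((1 + (-1) * / x) * (1 + g * / x) * (1 + (g+1) * / x)))) by (field; auto) end.
    apply Rmult_lt_0_compat; [apply pow_lt; lra | lra].
Qed.
Lemma poch_pos a m : a > 0 -> poch a m > 0.
Proof.
  intros Ha. induction m as [|m IH]; simpl; [lra|].
  apply Rmult_lt_0_compat; auto. pose proof (pos_INR m). lra.
Qed.

Lemma key_ineq alpha beta n :
  alpha + 1 > 0 -> (4 <= n)%nat -> INR n + (alpha + beta + 1) > 0 ->
  2 * (alpha + 1) * (alpha + 2) *
    ((INR n - 2) * (INR n - 3) * (INR n + (alpha+beta+1) + 2) * (INR n + (alpha+beta+1) + 3))
  - (alpha + 3) * (alpha + 4) *
    (INR n * (INR n - 1) * (INR n + (alpha+beta+1)) * (INR n + (alpha+beta+1) + 1)) > 0 ->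
  (phi_coef alpha beta n 1) ^ 2 < 2 * phi_coef alpha beta n 0 * phi_coef alpha beta n 2.
Proof.
  intros Ha Hn Hg Hk.
  unfold phi_coef. simpl poch.
  set (A := poch (alpha + 1) n / INR (fact n)).
  assert (HA : A > 0).
  { unfold A. apply Rdiv_lt_0_compat. apply poch_pos; lra.
    apply lt_0_INR. apply lt_O_fact. }
  clearbody A.
  assert (Hx : INR n >= 4).
  { apply Rle_ge. replace 4 with (INR 4) by (simpl; ring). apply le_INR. lia. }
  set (x := INR n) in *. set (g := alpha + beta + 1) in *.
  replace (x + alpha + beta + 1) with (x + g) by (unfold g; ring).
  simpl INR.
  set (u := x * (x - 1) * (x + g) * (x + g + 1)) in *.
  set (K := 2 * (alpha + 1) * (alpha + 2) *
    ((x - 2) * (x - 3) * (x + g + 2) * (x + g + 3)) - (alpha + 3) * (alpha + 4) * u) in *.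
  apply Rlt_0_minus.
  match goal with |- 0 < ?E =>
  replace E with (A^2 * u * K / (16 * ((alpha+1)*(alpha+2))^2 * ((alpha+3)*(alpha+4))))
  end.
  2:{ unfold K, u. field. repeat split; lra. }
  assert (Hu : u > 0).
  { unfold u. repeat apply Rmult_lt_0_compat; lra. }
  apply Rdiv_lt_0_compat.
  - assert (0 < A^2) by (apply pow_lt; lra). clearbody u K.
    repeat apply Rmult_lt_0_compat; lra.
  - repeat apply Rmult_lt_0_compat; try lra.
Qed.

Lemma alpha_facts alpha : alpha > (1 + sqrt 33) / 2 ->
  alpha + 1 > 0 /\ 2 * (alpha + 1) * (alpha + 2) - (alpha + 3) * (alpha + 4) > 0.
Proof.
  intros Ha.
  assert (Hs : sqrt 33 * sqrt 33 = 33) by (apply sqrt_sqrt; lra).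
  assert (Hs0 : 0 <= sqrt 33) by apply sqrt_pos.
  split; nra.
Qed.

Lemma coef0_nz alpha beta n : alpha + 1 > 0 -> phi_coef alpha beta n 0 <> 0.
Proof.
  intros Ha. unfold phi_coef; simpl.
  assert (poch (alpha + 1) n > 0) by (apply poch_pos; lra).
  assert (0 < INR (fact n)) by (apply lt_0_INR, lt_O_fact).
  assert (poch (alpha + 1) n / INR (fact n) > 0) by (apply Rdiv_lt_0_compat; lra).
  intro Hc. field_simplify in Hc; lra.
Qed.

Lemma div2_ge2 n : (4 <= n)%nat -> (2 <= Nat.div2 n)%nat.
Proof. intros H. pose proof (Nat.div2_odd n). destruct (Nat.odd n); simpl in *; lia. Qed.

Lemma contra_lt (a0 a1 a2 : R) : a1 ^ 2 < 2 * a0 * a2 -> a0 * a2 + a0 * a2 <= a1 * a1 -> False.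
Proof. intros; lra. Qed.

From mathcomp Require Import all_boot all_order all_algebra.
From mathcomp Require Import Rstruct complex ring lra.
Import GRing.Theory Num.Theory.
Import Pilot.Defs.
Section MC.
Local Open Scope complex_scope.
Local Open Scope ring_scope.
Lemma prod_ineq (F : realFieldType) (s : seq F) :
  let Q := \prod_(r <- s) ('X - r%:P) in 2 * Q`_0 * Q`_2 <= Q`_1 ^+ 2.
Proof.
elim: s => [|r s IH] /=; first by rewrite big_nil !coefE /=; lra.
rewrite big_cons mulrBl !coefB !coefXM !coefCM /=.
move: IH; set Q := \prod_(_ <- _) _ => /= IH.
have H0 : 0 <= Q`_1 ^+ 2 - 2 * Q`_0 * Q`_2 by rewrite subr_ge0.
have := mulr_ge0 (sqr_ge0 r) H0.
nra.
Qed.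

Lemma scaled_ineq (F : realFieldType) (c : F) (s : seq F) :
  let P := c *: \prod_(r <- s) ('X - r%:P) in 2 * P`_0 * P`_2 <= P`_1 ^+ 2.
Proof.
move=> /=; rewrite !coefZ.
have := @prod_ineq F s; set Q := \prod_(_ <- _) _ => /= IH.
have H0 : 0 <= Q`_1 ^+ 2 - 2 * Q`_0 * Q`_2 by rewrite subr_ge0.
have := mulr_ge0 (sqr_ge0 c) H0. nra.
Qed.

Definition toC (z : Cplx) : R[i] := @Complex R (fst z) (snd z).

Lemma toC_add z w : toC (Cadd z w) = toC z + toC w.
Proof. by case: z => a b; case: w => c d. Qed.

Lemma toC_mul z w : toC (Cmul z w) = toC z * toC w.
Proof. by case: z => a b; case: w => c d. Qed.

Lemma toC_scale c z : toC (Cscale c z) = c%:C * toC z.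
Proof. case: z => a b; rewrite /toC /=; congr (_ +i* _); by rewrite mul0r ?subr0 ?addr0. Qed.

Lemma toC_pow z k : toC (Cpow z k) = toC z ^+ k.
Proof. elim: k => [|k IH] /=; first by []. by rewrite toC_mul IH exprSr. Qed.

Lemma toC_sum f n : toC (Csum f n) = \sum_(i < n.+1) toC (f i).
Proof. elim: n => [|n IH] /=; first by rewrite big_ord1.
by rewrite toC_add IH [in RHS]big_ord_recr. Qed.

Lemma toC_phi a b n z :
  toC (phiC a b n z) =
  (\poly_(k < (Nat.div2 n).+1) (phi_coef a b n k)%:C).[toC z].
Proof.
rewrite horner_poly /phiC toC_sum; apply: eq_bigr => i _.
by rewrite toC_scale toC_pow.
Qed.

Lemma all_real_ineq (a : nat -> R) (d : nat) : (2 <= d)%N -> a 0%N != 0 ->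
  (forall x : R[i], root (\poly_(k < d.+1) (a k)%:C) x -> complex.Im x = 0) ->
  2 * a 0%N * a 2%N <= a 1%N ^+ 2.
Proof.
move=> hd ha0 hroots.
set P := \poly_(k < d.+1) a k.
set PC := \poly_(k < d.+1) (a k)%:C.
have hPC : PC = map_poly (real_complex R) P.
  apply/polyP => k; rewrite coef_map !coef_poly.
  by case: (k < d.+1)%N.
have PC0 : PC != 0.
  apply/eqP => /(congr1 (fun p : {poly R[i]} => p`_0)).
  rewrite coef_poly /= coef0 => /complexI /eqP; exact/negP.
have [r hr] := closed_field_poly_normal PC.
have lc0 : lead_coef PC != 0 by rewrite lead_coef_eq0.
have rreal : forall z, z \in r -> z = (complex.Re z)%:C.
  move=> z zr; have : root PC z -> complex.Im z = 0 := hroots z.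
  rewrite hr rootZ // root_prod_XsubC zr => /(_ isT).
  by case: z {zr} => x y /= ->.
set Q := \prod_(z <- r) ('X - (complex.Re z)%:P).
have hQ : \prod_(z <- r) ('X - z%:P) = map_poly (real_complex R) Q.
  rewrite rmorph_prod /=; apply: eq_big_seq => z zr.
  by rewrite map_polyXsubC /= -rreal.
have hlc : lead_coef PC = (lead_coef P)%:C.
  by rewrite hPC lead_coef_map_inj //; exact: complexI.
have hP : P = lead_coef P *: Q.
  apply: (@map_inj_poly _ _ (real_complex R) (@complexI R)) => //.
  by rewrite linearZ /= -hQ -hlc -hPC.
have := @scaled_ineq _ (lead_coef P) [seq complex.Re z | z <- r].
rewrite big_map -/Q -hP /P !coef_poly.
have -> : (0 < d.+1)%N by [].
have -> : (1 < d.+1)%N by rewrite ltnS ltnW.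
by have -> : (2 < d.+1)%N by [].
Qed.

Lemma no_nonreal_roots a b n : ~ has_nonreal_zero a b n ->
  forall x : R[i], root (\poly_(k < (Nat.div2 n).+1) (phi_coef a b n k)%:C) x -> complex.Im x = 0.
Proof.
move=> hno [p q] /= hr.
case: (Req_dec q 0) => // hq; exfalso; apply: hno.
exists (p, q); split => //.
have := toC_phi a b n (p, q).
rewrite /toC /= (rootP hr).
case: (phiC a b n (p, q)) => u w /= [-> ->] //.
Qed.

Lemma all_real_ineq2 (a : nat -> R) (d : nat) : (2 <= d)%N -> a 0%N != 0 ->
  (forall x : R[i], root (\poly_(k < d.+1) (a k)%:C) x -> complex.Im x = 0) ->
  a 0%N * a 2%N + a 0%N * a 2%N <= a 1%N * a 1%N.
Proof. move=> h1 h2 h3; have := all_real_ineq a d h1 h2 h3; rewrite expr2; lra. Qed.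

End MC.
Open Scope R_scope.

Theorem mainTheorem14 (alpha beta : R) :
  alpha > (1 + sqrt 33) / 2 ->
  exists N : nat, forall n : nat, (N <= n)%coq_nat -> has_nonreal_zero alpha beta n.
Proof.
  intros Ha.
  destruct (alpha_facts alpha Ha) as [Ha1 HD].
  destruct (eventually_all (alpha + beta + 1) _ _ HD) as [N HN].
  exists N. intros n Hn. destruct (HN n Hn) as [H4 [Hg Hk]].
  apply NNPP; intro Hno.
  assert (Hlt := key_ineq alpha beta n Ha1 H4 Hg Hk).
  assert (Hd : (2 <= Nat.div2 n)%N) by (apply/leP; apply div2_ge2; exact H4).
  have := all_real_ineq2 (phi_coef alpha beta n) (Nat.div2 n) Hd (introN eqP (coef0_nz alpha beta n Ha1))
            (@no_nonreal_roots alpha beta n Hno).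
  move/RleP => Hle. exact: (contra_lt _ _ _ Hlt Hle).
Qed.
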